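(* Let $\mathcal{V}$ be a convex open subset of a Banach space $\mathcal{Y}$, $f:\mathcal{V}\to\mathbb{R}$ a function, and $F:[0,+\infty)\to[0,+\infty)$ a non-decreasing locally Lipschitz function. Fix $x_0\in\mathcal{V}$ and let $s:[0,R)\to\mathbb{R}$, with $R<\infty$, be a solution of $s'=F(s)$, $s(0)=|f(x_0)|$. If $|D|f(x)\le F(|f(x)|)$ for all $x\in\mathcal{V}$, then $|f(x)|\le s(\|x-x_0\|)$ for all $x\in\mathcal{V}\cap B(x_0,R)$.
   Context: For $f:\mathcal{Y}\supset\mathcal{V}\to\mathbb{R}$, the metric derivative (pointwise Lipschitz constant) is $|D|f(x):=\limsup_{r\to0}\sup_{y\in B(x,r)}\frac{|f(x)-f(y)|}{\|x-y\|}$. *)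

(* Defs.v *)
From Stdlib Require Import Reals Lra.
Open Scope R_scope.

Record Banach := {
  carrier :> Type;
  vzero : carrier;
  vadd : carrier -> carrier -> carrier;
  vopp : carrier -> carrier;
  vscal : R -> carrier -> carrier;
  vnorm : carrier -> R;
  vadd_assoc : forall x y z, vadd x (vadd y z) = vadd (vadd x y) z;
  vadd_comm : forall x y, vadd x y = vadd y x;
  vadd_0 : forall x, vadd x vzero = x;
  vadd_opp : forall x, vadd x (vopp x) = vzero;
  vscal_assoc : forall a b x, vscal a (vscal b x) = vscal (a * b) x;
  vscal_1 : forall x, vscal 1 x = x;
  vscal_distr_l : forall a x y, vscal a (vadd x y) = vadd (vscal a x) (vscal a y);
  vscal_distr_r : forall a b x, vscal (a + b) x = vadd (vscal a x) (vscal b x);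
  vnorm_nonneg : forall x, 0 <= vnorm x;
  vnorm_eq0 : forall x, vnorm x = 0 -> x = vzero;
  vnorm_scal : forall a x, vnorm (vscal a x) = Rabs a * vnorm x;
  vnorm_triangle : forall x y, vnorm (vadd x y) <= vnorm x + vnorm y;
  vcomplete : forall u : nat -> carrier,
    (forall eps, 0 < eps -> exists N, forall n m, (n >= N)%nat -> (m >= N)%nat ->
        vnorm (vadd (u n) (vopp (u m))) < eps) ->
    exists l, forall eps, 0 < eps -> exists N, forall n, (n >= N)%nat ->
        vnorm (vadd (u n) (vopp l)) < eps
}.

Definition vdist {Y : Banach} (x y : Y) : R := vnorm Y (vadd Y x (vopp Y y)).

Definition is_convex {Y : Banach} (V : Y -> Prop) : Prop :=
  forall x y t, V x -> V y -> 0 <= t <= 1 ->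
    V (vadd Y (vscal Y (1 - t) x) (vscal Y t y)).

Definition is_open {Y : Banach} (V : Y -> Prop) : Prop :=
  forall x, V x -> exists r, 0 < r /\ forall y, vdist y x < r -> V y.

Definition ratio_sup_le {Y : Banach} (V : Y -> Prop) (f : Y -> R)
    (x : Y) (r M : R) : Prop :=
  forall y, V y -> 0 < vdist x y -> vdist y x < r ->
    Rabs (f x - f y) / vdist x y <= M.

(* metric derivative bound:  |D|f(x) := limsup_{r->0} sup_{y in B(x,r)} ... <= c,
   i.e. for every eps > 0 there is delta > 0 such that the inner sup is
   <= c + eps for every r in (0, delta). *)
Definition metric_deriv_le {Y : Banach} (V : Y -> Prop) (f : Y -> R)
    (x : Y) (c : R) : Prop :=
  forall eps, 0 < eps -> exists delta, 0 < delta /\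
    forall r, 0 < r < delta -> ratio_sup_le V f x r (c + eps).

Definition nondecr_on_nonneg (F : R -> R) : Prop :=
  forall a b, 0 <= a -> a <= b -> F a <= F b.

Definition loc_lipschitz_on_nonneg (F : R -> R) : Prop :=
  forall a, 0 <= a -> exists delta L, 0 < delta /\ 0 <= L /\
    forall u v, 0 <= u -> 0 <= v -> Rabs (u - a) < delta -> Rabs (v - a) < delta ->
      Rabs (F u - F v) <= L * Rabs (u - v).

Definition deriv_within_0R (s : R -> R) (Rr t d : R) : Prop :=
  forall eps, 0 < eps -> exists delta, 0 < delta /\
    forall h, h <> 0 -> Rabs h < delta -> 0 <= t + h < Rr ->
      Rabs ((s (t + h) - s t) / h - d) < eps.

(* Main.v *)
Require Import Defs.
From Stdlib Require Import Reals Lra Psatz Classical.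
Open Scope R_scope.

Lemma abs_le a b : Rabs a <= b -> -b <= a <= b.
Proof. intros H. split_Rabs; lra. Qed.

Lemma min_pos a b : 0 < a -> 0 < b -> 0 < Rmin a b /\ Rmin a b <= a /\ Rmin a b <= b.
Proof. intros. unfold Rmin; destruct Rle_dec; lra. Qed.

Lemma exp_le x y : x <= y -> exp x <= exp y.
Proof. intros [H|H]. left; apply exp_increasing; auto. subst; lra. Qed.

Lemma cont_ind (a b : R) (P : R -> Prop) : a <= b -> P a ->
 (forall t, a < t <= b -> (forall u, a <= u < t -> P u) -> P t) ->
 (forall t, a <= t < b -> (forall u, a <= u <= t -> P u) ->
    exists del, 0 < del /\ forall u, t < u < t + del -> u <= b -> P u) ->
 forall t, a <= t <= b -> P t.
Proof.
  intros hab Pa Hcl Hext.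
  set (E := fun t => a <= t <= b /\ forall u, a <= u <= t -> P u).
  assert (Ea : E a).
  { split. lra. intros u Hu. replace u with a by lra. exact Pa. }
  assert (bE : bound E) by (exists b; intros t [Ht _]; lra).
  destruct (completeness E bE (ex_intro _ a Ea)) as [m [Hub Hlub]].
  assert (Ham : a <= m) by (apply Hub; exact Ea).
  assert (Hmb : m <= b) by (apply Hlub; intros t [Ht _]; lra).
  assert (Hbelow : forall u, a <= u < m -> P u).
  { intros u Hu. destruct (classic (exists t, E t /\ u < t)) as [[t [[Ht HPt] Hut]] | Hn].
    - apply HPt; lra.
    - exfalso. assert (m <= u).
      { apply Hlub. intros t Et. destruct (Rle_or_lt t u); auto.
        exfalso; apply Hn; eauto. }
      lra. }
  assert (Em : forall u, a <= u <= m -> P u).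
  { intros u Hu. destruct (Req_dec u m).
    - subst u. destruct (Req_dec m a). subst m; auto. apply Hcl. lra. exact Hbelow.
    - apply Hbelow; lra. }
  assert (m = b).
  { destruct (Req_dec m b); auto. exfalso.
    assert (Hmb2 : m < b) by (destruct Hmb; [auto| contradiction]).
    destruct (Hext m (conj Ham Hmb2) Em) as [del [Hdel Hd]].
    set (m' := Rmin (m + del/2) b).
    assert (Hm' : m < m' /\ m' <= m + del/2 /\ m' <= b) by (unfold m', Rmin; destruct Rle_dec; lra).
    assert (Em' : E m').
    { split. lra. intros u Hu. destruct (Rle_or_lt u m). apply Em; lra. apply Hd; lra. }
    assert (m' <= m) by exact (Hub m' Em'). lra. }
  intros t Ht. apply Em. lra.
Qed.

Definition sapprox (s F : R -> R) (Rr : R) :=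
  forall t, 0 <= t < Rr -> forall eta, 0 < eta -> exists del, 0 < del /\
    forall u, 0 <= u < Rr -> Rabs (u - t) < del ->
      Rabs (s u - s t - F (s t) * (u - t)) <= eta * Rabs (u - t).

Definition gapprox (g F : R -> R) (d : R) :=
  forall t, 0 <= t <= d -> forall eta, 0 < eta -> exists del, 0 < del /\
    forall u, 0 <= u <= d -> Rabs (u - t) < del ->
      Rabs (g u - g t) <= (F (g t) + eta) * Rabs (u - t).

Lemma closed_step g s F psi d Rr T t :
  0 <= T < t -> t <= d -> d < Rr ->
  (forall a, 0 <= a -> 0 <= F a) ->
  (forall t, 0 <= t < Rr -> 0 <= s t) ->
  (forall t, 0 <= t <= d -> 0 <= g t) ->
  sapprox s F Rr -> gapprox g F d ->
  (forall u, T <= u <= t -> psi u <= psi t) ->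
  (forall u, T <= u < t -> g u - s u <= psi u) ->
  g t - s t <= psi t.
Proof.
  intros HT Htd HdR HF Hs0 Hg0 Hs Hg Hpsi Hw.
  destruct (Rle_or_lt (g t - s t) (psi t)) as [|Hgap]; auto. exfalso.
  set (gap := g t - s t - psi t).
  destruct (Hg t ltac:(lra) 1 ltac:(lra)) as [dg [Hdg Hgb]].
  destruct (Hs t ltac:(lra) 1 ltac:(lra)) as [ds [Hds Hsb]].
  set (C := F (g t) + 1).
  assert (HC : 1 <= C) by (unfold C; pose proof (HF (g t) (Hg0 t ltac:(lra))); lra).
  assert (Hq : 0 < gap / (2 * (C + 1))) by (unfold gap; apply Rdiv_lt_0_compat; lra).
  destruct (min_pos (dg/2) (ds/2) ltac:(lra) ltac:(lra)) as [H1 [H2 H3]].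
  destruct (min_pos (t - T) _ ltac:(lra) Hq) as [H4 [H5 H6]].
  destruct (min_pos _ _ H1 H4) as [H7 [H8 H9]].
  set (k := Rmin (Rmin (dg/2) (ds/2)) (Rmin (t - T) (gap / (2 * (C + 1))))) in *.
  set (u := t - k).
  assert (Huk : u - t = - k) by (unfold u; ring).
  assert (Hak : Rabs (u - t) = k) by (rewrite Huk, Rabs_Ropp, Rabs_right; lra).
  assert (Hu1 : 0 <= u <= d) by (unfold u; lra).
  assert (Hu2 : 0 <= u < Rr) by (unfold u; lra).
  assert (Hu3 : Rabs (u - t) < dg) by lra.
  assert (Hu4 : Rabs (u - t) < ds) by lra.
  pose proof (Hgb u Hu1 Hu3) as A1.
  pose proof (Hsb u Hu2 Hu4) as A2.
  rewrite Hak in A1, A2. rewrite Huk in A2.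
  apply abs_le in A1. apply abs_le in A2.
  assert (Hu5 : T <= u < t) by (unfold u; lra).
  pose proof (Hw u Hu5) as A3.
  pose proof (Hpsi u ltac:(lra)) as A4.
  assert (A5 : 0 <= F (s t)) by (apply HF, Hs0; lra).
  assert (A6 : 0 <= F (s t) * k) by (apply Rmult_le_pos; lra).
  assert (A7 : (C + 1) * k <= gap / 2).
  { apply Rle_trans with ((C+1) * (gap / (2 * (C + 1)))).
    apply Rmult_le_compat_l; lra. right; field; lra. }
  fold C in A1. unfold gap in *. lra.
Qed.

Lemma comparison (g s F : R -> R) (d Rr : R) :
  0 <= d < Rr ->
  (forall a, 0 <= a -> 0 <= F a) -> nondecr_on_nonneg F -> loc_lipschitz_on_nonneg F ->
  (forall t, 0 <= t < Rr -> 0 <= s t) -> sapprox s F Rr ->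
  (forall t, 0 <= t <= d -> 0 <= g t) -> gapprox g F d ->
  g 0 <= s 0 ->
  forall t, 0 <= t <= d -> g t <= s t.
Proof.
  intros Hd HF Hmon Hlip Hs0 Hs Hg0 Hg H0.
  apply (cont_ind 0 d (fun t => g t <= s t)); [lra | exact H0 | | ].
  - intros t Ht Hb.
    pose proof (closed_step g s F (fun _ => 0) d Rr 0 t ltac:(lra) ltac:(lra) ltac:(lra)
      HF Hs0 Hg0 Hs Hg ltac:(intros; lra)) as Hc.
    cbv beta in Hc. assert (g t - s t <= 0); [|lra]. apply Hc.
    intros u Hu. pose proof (Hb u Hu). lra.
  - intros T HT Hb. pose proof (Hb T ltac:(lra)) as HgT.
    assert (HsT : 0 <= s T) by (apply Hs0; lra).
    destruct (Hlip (s T) HsT) as [dL [L [HdL [HL HLip]]]].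
    destruct (Hs T ltac:(lra) 1 ltac:(lra)) as [ds1 [Hds1 Hsb1]].
    set (A := F (s T) + 1).
    assert (HA : 1 <= A) by (unfold A; pose proof (HF _ HsT); lra).
    assert (Hq1 : 0 < dL / (4 * A)) by (apply Rdiv_lt_0_compat; lra).
    destruct (min_pos (ds1/2) (Rmin (dL / (4 * A)) (d - T)) ltac:(lra)
       ltac:(destruct (min_pos _ _ Hq1 (ltac:(lra) : 0 < d - T)); tauto)) as [Hh1 [Hh2 Hh3]].
    destruct (min_pos _ _ Hq1 (ltac:(lra) : 0 < d - T)) as [_ [Hh4 Hh5]].
    set (h := Rmin (ds1 / 2) (Rmin (dL / (4 * A)) (d - T))) in *.
    assert (HAh : A * h <= dL / 4).
    { apply Rle_trans with (A * (dL / (4 * A))).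
      apply Rmult_le_compat_l; lra. right; field; lra. }
    assert (Hsnear : forall u, T <= u <= T + h -> Rabs (s u - s T) <= dL / 4).
    { intros u Hu.
      assert (Hu1 : 0 <= u < Rr) by lra.
      assert (Hu2 : Rabs (u - T) < ds1) by (rewrite Rabs_right; lra).
      pose proof (Hsb1 u Hu1 Hu2) as Hb1. rewrite (Rabs_right (u - T)) in Hb1 by lra.
      apply abs_le in Hb1.
      assert (A * (u - T) <= A * h) by (apply Rmult_le_compat_l; lra).
      unfold A in *. apply Rabs_le. nra. }
    set (K := L + 1).
    set (E := exp (K * h)).
    assert (HE : 1 <= E).
    { unfold E. rewrite <- exp_0. apply exp_le. unfold K. apply Rmult_le_pos; lra. }
    set (e0 := dL / (4 * E)).
    assert (He0 : 0 < e0) by (unfold e0; apply Rdiv_lt_0_compat; lra).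
    assert (He0E : e0 * E = dL / 4) by (unfold e0; field; lra).
    assert (Claim : forall eps, 0 < eps <= e0 -> forall u, T <= u <= T + h ->
               g u - s u <= eps * exp (K * (u - T))).
    { intros eps Heps.
      apply (cont_ind T (T + h) (fun u => g u - s u <= eps * exp (K * (u - T)))).
      - lra.
      - replace (T - T) with 0 by ring. rewrite Rmult_0_r, exp_0. lra.
      - intros t Ht Hbt. apply (closed_step g s F (fun u => eps * exp (K * (u - T))) d Rr T t);
          try lra; auto.
        intros u Hu. apply Rmult_le_compat_l; [lra|]. apply exp_le.
        apply Rmult_le_compat_l; unfold K; lra.
      - intros t Ht Hbt. pose proof (Hbt t ltac:(lra)) as Hwt. cbv beta in Hwt.
        set (pt := eps * exp (K * (t - T))) in *.
        assert (Hpt : 0 < pt) by (unfold pt; apply Rmult_lt_0_compat; [lra|apply exp_pos]).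
        assert (HptE : pt <= dL / 4).
        { rewrite <- He0E. unfold pt. apply Rmult_le_compat; try lra.
          left; apply exp_pos. unfold E; apply exp_le. apply Rmult_le_compat_l; unfold K; lra. }
        assert (Hgt0 : 0 <= g t) by (apply Hg0; lra).
        assert (Hst0 : 0 <= s t) by (apply Hs0; lra).
        assert (HFd : F (g t) - F (s t) <= L * pt).
        { destruct (Rle_or_lt (g t) (s t)) as [Hle|Hlt].
          - pose proof (Hmon _ _ Hgt0 Hle). assert (0 <= L * pt) by (apply Rmult_le_pos; lra). lra.
          - pose proof (Hsnear t ltac:(lra)) as Hn. apply abs_le in Hn.
            pose proof (HLip (g t) (s t) Hgt0 Hst0) as HL1.
            assert (Rabs (g t - s T) < dL) by (apply Rabs_def1; lra).
            assert (Rabs (s t - s T) < dL) by (apply Rabs_def1; lra).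
            specialize (HL1 ltac:(assumption) ltac:(assumption)).
            rewrite (Rabs_right (g t - s t)) in HL1 by lra. apply abs_le in HL1.
            assert (L * (g t - s t) <= L * pt) by (apply Rmult_le_compat_l; lra). lra. }
        destruct (Hg t ltac:(lra) (pt / 2) ltac:(lra)) as [dg [Hdg Hgb]].
        destruct (Hs t ltac:(lra) (pt / 2) ltac:(lra)) as [ds [Hds Hsb]].
        destruct (min_pos _ _ Hdg Hds) as [Hm1 [Hm2 Hm3]].
        exists (Rmin dg ds). split; auto.
        intros u Hu Hub. cbv beta.
        assert (Hu1 : 0 <= u <= d) by lra.
        assert (Hu2 : 0 <= u < Rr) by lra.
        assert (Hr : Rabs (u - t) = u - t) by (apply Rabs_right; lra).
        assert (Hu3 : Rabs (u - t) < dg) by lra.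
        assert (Hu4 : Rabs (u - t) < ds) by lra.
        pose proof (Hgb u Hu1 Hu3) as A1. pose proof (Hsb u Hu2 Hu4) as A2.
        rewrite Hr in A1, A2. apply abs_le in A1. apply abs_le in A2.
        assert (Hpu : eps * exp (K * (u - T)) = pt * exp (K * (u - t))).
        { unfold pt. rewrite Rmult_assoc, <- exp_plus. f_equal. f_equal. ring. }
        rewrite Hpu.
        assert (Hex : 1 + K * (u - t) <= exp (K * (u - t))).
        { left. apply exp_ineq1. assert (0 < K * (u - t)) by (apply Rmult_lt_0_compat; unfold K; lra). lra. }
        assert (pt * (1 + K * (u - t)) <= pt * exp (K * (u - t))) by (apply Rmult_le_compat_l; lra).
        assert ((F (g t) - F (s t)) * (u - t) <= L * pt * (u - t)) by (apply Rmult_le_compat_r; lra).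
        unfold K in *. nra. }
    exists h. split; [lra|]. intros u Hu Hud. cbv beta.
    destruct (Rle_or_lt (g u) (s u)) as [|Hw]; auto. exfalso.
    set (w := g u - s u).
    assert (Hq : 0 < w / (2 * E)) by (unfold w; apply Rdiv_lt_0_compat; lra).
    destruct (min_pos _ _ He0 Hq) as [Hn1 [Hn2 Hn3]].
    pose proof (Claim (Rmin e0 (w / (2 * E))) ltac:(lra) u ltac:(lra)) as Hc.
    assert (exp (K * (u - T)) <= E).
    { unfold E. apply exp_le. apply Rmult_le_compat_l; unfold K; lra. }
    assert (Rmin e0 (w / (2 * E)) * exp (K * (u - T)) <= w / (2 * E) * E).
    { apply Rmult_le_compat; try lra. left; apply exp_pos. }
    assert (w / (2 * E) * E = w / 2) by (field; lra).
    unfold w in *. lra.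
Qed.

Section V.
Variable Y : Banach.

Lemma idem_zero (z : Y) : vadd Y z z = z -> z = vzero Y.
Proof.
  intros H. rewrite <- (vadd_0 Y z) at 1. rewrite <- (vadd_opp Y z) at 1.
  rewrite vadd_assoc, H, vadd_opp. reflexivity.
Qed.

Lemma vscal0 (x : Y) : vscal Y 0 x = vzero Y.
Proof. apply idem_zero. rewrite <- vscal_distr_r. f_equal. ring. Qed.

Lemma vopp_unique (x y : Y) : vadd Y x y = vzero Y -> y = vopp Y x.
Proof.
  intros H. rewrite <- (vadd_0 Y y). rewrite <- (vadd_opp Y x).
  rewrite vadd_assoc, (vadd_comm Y y x), H, vadd_comm, vadd_0. reflexivity.
Qed.

Lemma vopp_scal (x : Y) : vopp Y x = vscal Y (-1) x.
Proof.
  symmetry. apply vopp_unique. rewrite <- (vscal_1 Y x) at 1.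
  rewrite <- vscal_distr_r. replace (1 + -1) with 0 by ring. apply vscal0.
Qed.

Lemma vswap4 (a b c d : Y) : vadd Y (vadd Y a b) (vadd Y c d) = vadd Y (vadd Y a c) (vadd Y b d).
Proof.
  rewrite !vadd_assoc. f_equal. rewrite <- !vadd_assoc. f_equal. apply vadd_comm.
Qed.

Lemma lin_diff (x0 x : Y) (a b a' b' c : R) : a - a' = - c -> b - b' = c ->
  vadd Y (vadd Y (vscal Y a x0) (vscal Y b x)) (vopp Y (vadd Y (vscal Y a' x0) (vscal Y b' x)))
  = vscal Y c (vadd Y x (vopp Y x0)).
Proof.
  intros H1 H2. rewrite !vopp_scal, !vscal_distr_l, !vscal_assoc, vswap4, <- !vscal_distr_r.
  rewrite vadd_comm. f_equal; f_equal; lra.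
Qed.

End V.

Lemma sapprox_of (s F : R -> R) (Rr : R) :
  (forall t, 0 <= t < Rr -> deriv_within_0R s Rr t (F (s t))) -> sapprox s F Rr.
Proof.
  intros Hd t Ht eta Heta. destruct (Hd t Ht eta Heta) as [del [Hdel H]].
  exists del. split; auto. intros u Hu Hut.
  destruct (Req_dec u t) as [->|Hne].
  - replace (s t - s t - F (s t) * (t - t)) with 0 by ring. rewrite Rminus_diag, Rabs_R0. lra.
  - assert (Hh : u - t <> 0) by lra.
    pose proof (H (u - t) Hh Hut ltac:(replace (t + (u - t)) with u by ring; lra)) as H1.
    replace (t + (u - t)) with u in H1 by ring.
    replace (s u - s t - F (s t) * (u - t)) with ((u - t) * ((s u - s t) / (u - t) - F (s t))) by (field; auto).
    rewrite Rabs_mult, Rmult_comm. apply Rmult_le_compat_r. apply Rabs_pos. lra.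
Qed.

Theorem proposition3p1 (Y : Banach) (V : Y -> Prop) (f : Y -> R) (F : R -> R)
  (x0 : Y) (s : R -> R) (Rr : R) :
  is_convex V -> is_open V ->
  (forall a, 0 <= a -> 0 <= F a) ->
  nondecr_on_nonneg F ->
  loc_lipschitz_on_nonneg F ->
  V x0 ->
  0 < Rr ->
  (forall t, 0 <= t < Rr -> 0 <= s t) ->
  (forall t, 0 <= t < Rr -> deriv_within_0R s Rr t (F (s t))) ->
  s 0 = Rabs (f x0) ->
  (forall x, V x -> metric_deriv_le V f x (F (Rabs (f x)))) ->
  forall x, V x -> vdist x x0 < Rr -> Rabs (f x) <= s (vdist x x0).
Proof.
  intros Hconv Hopen HF Hmon Hlip HV0 HR Hs0 Hsd Hs0eq Hmd x Hx Hxd.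
  set (d := vdist x x0) in *.
  assert (Hd0 : 0 <= d) by apply vnorm_nonneg.
  destruct (Req_dec d 0) as [Hd|Hd].
  - assert (Hz := vnorm_eq0 Y _ Hd).
    assert (Hxx : x = x0).
    { rewrite (vadd_comm Y) in Hz. apply vopp_unique in Hz. rewrite Hz.
      symmetry. apply vopp_unique. rewrite vadd_comm. apply vadd_opp. }
    rewrite Hd, Hs0eq, Hxx. lra.
  - assert (Hdp : 0 < d) by lra.
    set (gam := fun t => vadd Y (vscal Y (1 - t/d) x0) (vscal Y (t/d) x)).
    assert (Hdist : forall t u, vdist (gam t) (gam u) = Rabs (t - u)).
    { intros t u. unfold vdist, gam.
      rewrite (lin_diff Y x0 x _ _ _ _ ((t - u) / d)) by (field; lra).
      rewrite vnorm_scal. fold (vdist x x0). fold d.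
      unfold Rdiv. rewrite Rabs_mult, (Rabs_right (/ d)).
      field; lra. left; apply Rinv_0_lt_compat; lra. }
    assert (HV : forall t, 0 <= t <= d -> V (gam t)).
    { intros t Ht. apply Hconv; auto. split.
      apply Rmult_le_pos; [lra | left; apply Rinv_0_lt_compat; lra].
      apply (Rmult_le_reg_r d); [lra|]. unfold Rdiv. rewrite Rmult_assoc, Rinv_l; lra. }
    assert (Hgd : gam d = x).
    { unfold gam. replace (d / d) with 1 by (field; lra). replace (1 - 1) with 0 by ring.
      rewrite vscal0, vscal_1, vadd_comm, vadd_0. reflexivity. }
    assert (Hg0 : gam 0 = x0).
    { unfold gam. replace (0 / d) with 0 by (field; lra). replace (1 - 0) with 1 by ring.
      rewrite vscal0, vscal_1, vadd_0. reflexivity. }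
    set (g := fun t => Rabs (f (gam t))).
    assert (Hga : gapprox g F d).
    { intros t Ht eta Heta. destruct (Hmd (gam t) (HV t Ht) eta Heta) as [del [Hdel Hr]].
      exists (del / 2). split; [lra|]. intros u Hu Hut.
      pose proof (Hr (del / 2) ltac:(lra)) as Hr2.
      destruct (Req_dec u t) as [->|Hne].
      - unfold g. rewrite !Rminus_diag, Rabs_R0. lra.
      - assert (Hb : Rabs (f (gam t) - f (gam u)) / vdist (gam t) (gam u) <= F (g t) + eta).
        { apply Hr2. apply HV; lra. rewrite Hdist. apply Rabs_pos_lt. lra.
          rewrite Hdist. auto. }
        rewrite Hdist in Hb.
        assert (Hpos : 0 < Rabs (t - u)) by (apply Rabs_pos_lt; lra).
        assert (Hb2 : Rabs (f (gam t) - f (gam u)) <= (F (g t) + eta) * Rabs (t - u)).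
        { replace (Rabs (f (gam t) - f (gam u))) with
            (Rabs (f (gam t) - f (gam u)) / Rabs (t - u) * Rabs (t - u)) by (field; lra).
          apply Rmult_le_compat_r; lra. }
        unfold g. rewrite (Rabs_minus_sym u t).
        eapply Rle_trans; [apply Rabs_triang_inv2|]. rewrite Rabs_minus_sym. exact Hb2. }
    pose proof (comparison g s F d Rr ltac:(lra) HF Hmon Hlip Hs0 (sapprox_of s F Rr Hsd)
      ltac:(intros; apply Rabs_pos) Hga ltac:(unfold g; rewrite Hg0, Hs0eq; lra) d ltac:(lra)) as Hc.
    unfold g in Hc. rewrite Hgd in Hc. exact Hc.
Qed.
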